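(* Let $a_1,a_2,a_3,\dots$ be nonnegative real numbers with $\sum_{j\ge1}a_j=1$, and let $a=\sup\{a_1,a_2,\dots\}$. Then for every $k\ge2$ and $2\le i\le k$, $$\sum_{j_1+\dots+j_i=k}a_{j_1}a_{j_2}\cdots a_{j_i}\le(1-a_k)a,$$ where the sum runs over all $(j_1,\dots,j_i)$ of positive integers with $j_1+\dots+j_i=k$. In particular $\sum_{j_1+\dots+j_i=k}a_{j_1}\cdots a_{j_i}\le a$ for all $k\ge1$ and $1\le i\le k$. *)

(* Defs.v *)
From HB Require Import structures.
From mathcomp Require Import all_boot all_order all_algebra.
From mathcomp Require Import all_classical all_reals all_analysis.
Set Implicit Arguments. Unset Strict Implicit. Unset Printing Implicit Defensive.
Import Order.TTheory GRing.Theory Num.Theory.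
Local Open Scope ring_scope.

(* comp_sum a k i = sum over all (j_1,...,j_i) of positive integers with
   j_1 + ... + j_i = k of a j_1 * ... * a j_i.
   Each j_t is <= k, so we range over functions 'I_i -> 'I_k.+1. *)
Definition comp_sum {R : numDomainType} (a : nat -> R) (k i : nat) : R :=
  \sum_(j : {ffun 'I_i -> 'I_k.+1} |
        [forall t, (0 < j t)%N] && ((\sum_(t < i) (j t : nat))%N == k))
    \prod_(t < i) a (j t).

(* Main.v *)
Require Import Defs.
From HB Require Import structures.
From mathcomp Require Import all_boot all_order all_algebra.
From mathcomp Require Import all_classical all_reals all_analysis.
From mathcomp Require Import zify.
Import Order.TTheory GRing.Theory Num.Theory.
Import numFieldNormedType.Exports.
Local Open Scope ring_scope.
Local Open Scope classical_set_scope.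

Definition hcons k i (p : 'I_k.+1 * {ffun 'I_i -> 'I_k.+1}) :
  {ffun 'I_i.+1 -> 'I_k.+1} :=
  [ffun t => if unlift ord0 t is Some t' then p.2 t' else p.1].

Definition hsplit k i (f : {ffun 'I_i.+1 -> 'I_k.+1}) :
  'I_k.+1 * {ffun 'I_i -> 'I_k.+1} :=
  (f ord0, [ffun t => f (lift ord0 t)]).

Lemma hconsK k i : cancel (@hcons k i) (@hsplit k i).
Proof.
case=> x g; rewrite /hsplit ffunE unlift_none; congr pair.
by apply/ffunP=> t; rewrite !ffunE liftK.
Qed.

Lemma hsplitK k i : cancel (@hsplit k i) (@hcons k i).
Proof.
move=> f; apply/ffunP=> t; rewrite ffunE.
by case: unliftP => [t'|] ->; rewrite ?ffunE.
Qed.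

Lemma hconsL k i x g t : @hcons k i (x, g) (lift ord0 t) = g t.
Proof. by rewrite ffunE liftK. Qed.

Lemma key (R : realDomainType) (a : nat -> R) (s : R) (k i : nat) :
  (forall j, (1 <= j)%N -> 0 <= a j) ->
  (forall j, (1 <= j)%N -> a j <= s) ->
  comp_sum a k i.+1 <=
  s * (\sum_(j < k.+1) (if (1 <= j < k)%N then a j else 0)) ^+ i.
Proof.
move=> a0 as_.
have s0 : 0 <= s by apply: le_trans (a0 1%N isT) (as_ 1%N isT).
set b := fun j : nat => if (1 <= j < k)%N then a j else 0.
have b0 : forall j, 0 <= b j by move=> j; rewrite /b; case: ifP => // /andP[] /a0.
pose G := fun f : {ffun 'I_i.+1 -> 'I_k.+1} =>
    (if ((\sum_(t < i.+1) (f t : nat))%N == k) then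
       s * \prod_(t < i) b (f (lift ord0 t)) else 0).
apply: (@le_trans _ _ (\sum_(f : {ffun 'I_i.+1 -> 'I_k.+1}) G f)).
  rewrite /comp_sum big_mkcond /=; apply: ler_sum => f _; rewrite /G.
  case: ifP => [/andP [/forallP Hpos /eqP Hs] | _]; last first.
    by case: ifP => // _; rewrite mulr_ge0 // prodr_ge0.
  rewrite Hs eqxx big_ord_recl /=.
  apply: ler_pM; first exact: a0.
  - by apply: prodr_ge0 => t _; apply: a0.
  - exact: as_.
  apply: ler_prod => t _; apply/andP; split; first exact: a0.
  rewrite /b Hpos /=.
  have -> : (f (lift ord0 t) < k)%N.
    have H1 := Hpos ord0.
    have H2 : (f (lift ord0 t) <= \sum_(t' < i) f (lift ord0 t'))%N.
      by rewrite (bigD1 t) //= leq_addr.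
    move: Hs; rewrite big_ord_recl /=; move=> Hs; set S := (\sum_(t' < i) f (lift ord0 t'))%N in H2 Hs; lia.
  by [].
rewrite (reindex (@hcons k i)) /=; last first.
  by apply: onW_bij; exists (@hsplit k i); [apply: hconsK | apply: hsplitK].
have -> : \sum_(p : 'I_k.+1 * {ffun 'I_i -> 'I_k.+1}) G (hcons k i p) =
   \sum_(x : 'I_k.+1) \sum_(g : {ffun 'I_i -> 'I_k.+1}) G (hcons k i (x, g)).
  by rewrite pair_bigA; apply: eq_bigr => -[x g].
rewrite /G.
rewrite exchange_big /=.
apply: (@le_trans _ _ (\sum_(g : {ffun 'I_i -> 'I_k.+1}) s * \prod_(t < i) b (g t))).
  apply: ler_sum => g _.
  pose x0 : 'I_k.+1 := inord (k - \sum_(t < i) (g t : nat)).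
  apply: (@le_trans _ _ (\sum_(x : 'I_k.+1) (if x == x0 then s * \prod_(t < i) b (g t) else 0))).
    apply: ler_sum => x _.
    rewrite big_ord_recl !ffunE unlift_none.
    under eq_bigr do rewrite hconsL.
    have E : (\sum_(t<i) (hcons k i (x,g) (lift ord0 t) : nat))%N = (\sum_(t<i) (g t : nat))%N.
      by apply: eq_bigr => t _; rewrite hconsL.
    rewrite /= E.
    case: ifP => [/eqP Hx | _]; last first.
      by case: ifP => // _; rewrite mulr_ge0 // prodr_ge0.
    have -> : x == x0.
      apply/eqP/val_inj; rewrite /x0 /= inordK; move: Hx; set S := (\sum_(t < i) (g t : nat))%N => Hx; lia.
    by [].
  by rewrite -big_mkcond big_pred1_eq.
rewrite -mulr_sumr -(bigA_distr_bigA (fun (t : 'I_i) (j : 'I_k.+1) => b j)) /= prodr_const card_ord.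
by [].
Qed.


Lemma conv (R : realDomainType) (a : nat -> R) k :
  \sum_(j < k.+1) (if (1 <= j < k)%N then a j else 0) = \sum_(1 <= j < k) a j.
Proof.
rewrite -(big_mkord xpredT (fun j => if (1 <= j < k)%N then a j else 0)).
case: k => [|k]; first by rewrite big_nat1 /= big_geq.
rewrite big_nat_recr //= ltnn addr0 big_ltn //= add0r.
by apply: eq_big_nat => j /andP[-> ->].
Qed.

Theorem lemma4 (R : realType) (a : nat -> R)
  (a_ge0 : forall j, (1 <= j)%N -> 0 <= a j)
  (a_sum : (\sum_(1 <= j < n) a j) @[n --> \oo] --> (1 : R)) :
  let s := sup [set a j | j in [set j : nat | (1 <= j)%N]] in
  (forall k i : nat, (2 <= k)%N -> (2 <= i <= k)%N ->
     comp_sum a k i <= (1 - a k) * s) /\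
  (forall k i : nat, (1 <= k)%N -> (1 <= i <= k)%N ->
     comp_sum a k i <= s).
Proof.
move=> s.
have Xge0 : forall n, 0 <= \sum_(1 <= j < n) a j.
  by move=> n; rewrite big_nat; apply: sumr_ge0 => j /andP[Hj _]; apply: a_ge0.
have Hmono : {homo (fun n => \sum_(1 <= j < n) a j) : n m / (n <= m)%N >-> n <= m}.
  apply/nondecreasing_seqP => n /=.
  case: n => [|n]; first by rewrite !big_geq.
  by rewrite [leRHS]big_nat_recr //= lerDl a_ge0.
have Hle1 : forall n, \sum_(1 <= j < n) a j <= 1.
  move=> n; have := nondecreasing_cvgn_le Hmono (cvgP _ a_sum) n.
  by rewrite (cvg_lim _ a_sum).
have aj1 : forall j, (1 <= j)%N -> a j <= 1.
  move=> j Hj; apply: le_trans (Hle1 j.+1).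
  by rewrite big_nat_recr //= lerDr.
have hub : has_ubound [set a j | j in [set j : nat | (1 <= j)%N]].
  by exists 1 => x [j Hj <-]; apply: aj1.
have as_ : forall j, (1 <= j)%N -> a j <= s.
  by move=> j Hj; apply: (ub_le_sup hub); exists j.
have s0 : 0 <= s by apply: le_trans (a_ge0 1%N isT) (as_ 1%N isT).
split.
- move=> k [|i] Hk /andP[Hi Hik] //.
  apply: le_trans (@key R a s k i a_ge0 as_) _.
  rewrite conv [leRHS]mulrC.
  have HX : \sum_(1 <= j < k) a j <= 1 - a k.
    rewrite lerBrDr; apply: le_trans (Hle1 k.+1).
    by rewrite (big_nat_recr k) //; lia.
  apply: ler_wpM2l => //.
  apply: le_trans HX.
  case: i Hi {Hik} => [|i] // _.
  by rewrite exprS ler_piMr // exprn_ile1.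
- move=> k [|i] Hk /andP[Hi Hik] //.
  apply: le_trans (@key R a s k i a_ge0 as_) _.
  rewrite conv -[leRHS]mulr1.
  by apply: ler_wpM2l => //; rewrite exprn_ile1.
Qed.
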